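(* Let $n,p,d$ be positive integers with $n>p$, and let $P(t)$ be the $(p-1)\times(p-1)$ matrix whose $(i,j)$ entry ($1\le i,j\le p-1$) is $\sum_{k\ge0}\binom{p-i}{k}\binom{n-1-j}{k}t^k$. Then $$\frac{\det(P(t^{d-1}))}{t^{(d-1)\binom{p-1}{2}}}\frac{(1-t^d)^p(1-t^{d-1})^{n-p}}{(1-t)^n}=\left(\sum_{k=0}^{p-1}\binom{n-p-1+k}{k}t^{k(d-1)}\right)\frac{(1-t^d)^p(1-t^{d-1})^{n-p}}{(1-t)^n}.$$ In particular, the Hilbert series $H$ of a generic determinantal ideal with parameters $(n,p,d)$ equals the right-hand side.
   Context: The left-hand side is the Hilbert series of $K[x_1,\dots,x_n]/I$ for a generic determinantal ideal $I$: the ideal generated by $p$ generic polynomials of degree $d$ in $K[x_1,\dots,x_n]$ together with the maximal minors of a $p\times(n-1)$ matrix of generic polynomials of degree $d-1$. *)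

(* Defs.v *)
(* Rational functions in one variable t over Q are
   modelled as {fraction {poly rat}}; 'X plays the role of t. *)
From HB Require Import structures.
From mathcomp Require Import all_boot all_order all_algebra.
From mathcomp Require Export fraction.
Set Implicit Arguments. Unset Strict Implicit. Unset Printing Implicit Defensive.
Import GRing.Theory.
Local Open Scope ring_scope.

(* P(x) : the (p-1)x(p-1) matrix whose (i,j) entry (1-based, i = i'+1,
   j = j'+1) is  sum_{k>=0} C(p-i,k) C(n-1-j,k) x^k.  The sum is finite:
   C(p-i,k) = 0 for k > p-i, and p-i < p < n, so summing over k < n
   captures every nonzero term. *)
Definition Pmat (n p : nat) (x : {poly rat}) : 'M[{poly rat}]_(p.-1) :=
  \matrix_(i < p.-1, j < p.-1)
     \sum_(k < n) ('C(p - i.+1, k) * 'C(n - 1 - j.+1, k))%:R *: x ^+ k.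

Notation RF := {fraction {poly rat}}.

Definition toRF (q : {poly rat}) : RF := tofrac q.

(* Main.v *)
Require Import Defs.
From HB Require Import structures.
From mathcomp Require Import all_boot all_order all_algebra fraction.
From mathcomp Require Import zify ring perm.
Set Implicit Arguments. Unset Strict Implicit. Unset Printing Implicit Defensive.
Import GRing.Theory.
Local Open Scope ring_scope.

Section Core.
Variable R : comNzRingType.

Lemma sum_trunc (a b : nat) (F : nat -> R) : (a <= b)%N ->
  (forall l, (a <= l)%N -> (l < b)%N -> F l = 0) ->
  \sum_(l < b) F l = \sum_(l < a) F l.
Proof.
move=> ab H; rewrite (big_ord_widen b F ab) [RHS]big_mkcond /=.
apply: eq_bigr => i _; by case: ltnP => // h; rewrite H.
Qed.

Lemma sum_delta (m k : nat) (F : nat -> R) :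
  \sum_(l < m) (k == l)%:R * F l = (k < m)%:R * F k.
Proof.
case: (ltnP k m) => h.
  rewrite (bigD1 (Ordinal h)) //= eqxx mul1r big1 ?addr0 ?mul1r // => i ne.
  have -> : (k == i) = false.
    apply/negbTE; apply: contra ne => /eqP e; apply/eqP/val_inj => /=; by rewrite e.
  by rewrite mul0r.
rewrite mul0r big1 // => i _.
have -> : (k == i) = false by apply/negbTE; rewrite neq_ltn (leq_trans (ltn_ord i) h) orbT.
by rewrite mul0r.
Qed.

Variables (x : R) (m e N : nat).
Hypothesis mN : (m < N)%N.

Definition Lm : 'M[R]_m := \matrix_(i, l) ('C(i, l))%:R.
Definition Sm : 'M[R]_(m, N) :=
  \matrix_(l, k) (((k : nat) == l.+1)%:R + ((k : nat) == l)%:R).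
Definition Dm : 'M[R]_N := diag_mx (\row_(k < N) x ^+ k).
Definition Tm : 'M[R]_(m, N) :=
  \matrix_(l, k) (((l : nat) <= k)%N%:R * ('C(e.+1, k - l))%:R).
Definition Am : 'M[R]_(m, N) := \matrix_(i, k) ('C(i.+1, k))%:R.
Definition Bm : 'M[R]_(m, N) := \matrix_(j, k) ('C(e.+1 + j, k))%:R.
Definition Pp : 'M[R]_m :=
  \matrix_(i, j) \sum_(k < N) x ^+ k *+ ('C(i.+1, k) * 'C(e.+1 + j, k)).

Lemma cut_bin (i k : nat) : (i < m)%N -> (k < m)%N%:R * ('C(i, k))%:R = ('C(i, k))%:R :> R.
Proof.
move=> im; case: (ltnP k m) => h; first by rewrite mul1r.
by rewrite bin_small ?mulr0 // (leq_trans im h).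
Qed.

Lemma F1 : Lm *m Sm = Am.
Proof.
apply/matrixP => i k; rewrite !mxE.
under eq_bigr => l _ do rewrite !mxE mulrDr.
rewrite big_split /=.
under [X in _ + X = _]eq_bigr => l _ do rewrite mulrC.

rewrite (sum_delta m k (fun l => ('C(i, l))%:R)) cut_bin //.
case: k => [[|k] hk] /=.
  rewrite big1 ?add0r ?bin0 // => l _; by rewrite mulr0.
under eq_bigr => l _ do rewrite eqSS mulrC.

by rewrite (sum_delta m k (fun l => ('C(i, l))%:R)) !cut_bin // binS natrD addrC.
Qed.

Lemma F2 : Lm *m Tm = Bm.
Proof.
apply/matrixP => j k; rewrite !mxE.
under eq_bigr => l _ do rewrite !mxE.
set G := fun l : nat => ('C(j, l))%:R * ((l <= k)%N%:R * ('C(e.+1, k - l))%:R) : R.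
have G0 : forall l, (j < l)%N -> G l = 0.
  by move=> l hl; rewrite /G bin_small // mul0r.
have G1 : forall l, (k < l)%N -> G l = 0.
  by move=> l hl; rewrite /G leqNgt hl mul0r mulr0.
change (\sum_(l < m) G l = ('C(e.+1 + j, k))%:R).
rewrite (@sum_trunc j.+1 m) //; last by move=> l h1 h2; apply: G0.
rewrite -(@sum_trunc j.+1 (j.+1 + k.+1)) ?leq_addr //; last by move=> l h1 h2; apply: G0.
rewrite (@sum_trunc k.+1 (j.+1 + k.+1)) ?leq_addl //; last by move=> l h1 h2; apply: G1.
rewrite addnC -binomial.Vandermonde natr_sum; apply: eq_bigr => l _.
by rewrite /G -ltnS ltn_ord mul1r natrM.
Qed.

Lemma F3 : Pp = Am *m Dm *m Bm^T.
Proof.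
apply/matrixP => i j; rewrite /Dm mul_mx_diag !mxE.
apply: eq_bigr => k _; rewrite !mxE.
by rewrite -mulr_natl natrM; ring.
Qed.

Lemma detL : \det Lm = 1.
Proof.
rewrite det_trig; last by apply/is_trig_mxP => i j h; rewrite mxE bin_small.
by rewrite big1 // => i _; rewrite mxE binn.
Qed.

Lemma detPp : \det Pp = \det (Sm *m Dm *m Tm^T).
Proof.
rewrite F3 -F1 -F2 trmx_mul !mulmxA det_mulmx det_tr detL mulr1 -!mulmxA det_mulmx detL mul1r !mulmxA.
by [].
Qed.

Definition w (t : nat) : R := (-1) ^+ t * ('C(e + t, t))%:R.
Definition conv (f M : nat) : R := \sum_(s < M.+1) ('C(f, M - s))%:R * w s.
Lemma conv_step f M : conv f.+1 M.+1 = conv f M.+1 + conv f M.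
Proof.
rewrite /conv (big_ord_recr M.+1) (big_ord_recr M.+1 (fun s : 'I_M.+2 => ('C(f, M.+1 - s))%:R * w s)).
have -> : \sum_(i < M.+1) ('C(f.+1, M.+1 - widen_ord (leqnSn M.+1) i))%:R * w (widen_ord (leqnSn M.+1) i)
   = \sum_(i < M.+1) ('C(f, M.+1 - widen_ord (leqnSn M.+1) i))%:R * w (widen_ord (leqnSn M.+1) i)
     + \sum_(i < M.+1) ('C(f, M - i))%:R * w i.
  rewrite -big_split; apply: eq_bigr => s _.
  rewrite [nat_of_ord (widen_ord _ _)]/= subSn; last by rewrite -ltnS.
  by rewrite binS natrD mulrDl.
rewrite [nat_of_ord (@ord_max _)]/= subnn !bin0.
exact: addrAC.
Qed.

Lemma conv0 M : conv 0 M = w M.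
Proof.
rewrite /conv big_ord_recr big1 ?add0r.
  by rewrite /= subnn bin0 mul1r add0r.
move=> s _; rewrite [nat_of_ord (widen_ord _ _)]/=.
by rewrite bin0n subn_eq0 leqNgt ltn_ord mul0r.
Qed.

Lemma conv_zero f : conv f 0 = 1.
Proof. by rewrite /conv big_ord1 /= !bin0 /w expr0 addn0 bin0 !mul1r. Qed.

Lemma conv_gen f : (f <= e)%N -> forall M, conv f M = (-1) ^+ M * ('C(e - f + M, M))%:R.
Proof.
elim: f => [|f IH] hf M; first by rewrite conv0 subn0.
case: M => [|M]; first by rewrite conv_zero expr0 addn0 bin0 mul1r.
rewrite conv_step !IH ?(ltnW hf) //.
have -> : (e - f = (e - f.+1).+1)%N by rewrite subnSK.
set h := (e - f.+1)%N.
have -> : ('C(h.+1 + M.+1, M.+1) = 'C(h + M.+1, M.+1) + 'C(h.+1 + M, M))%N.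
  by rewrite addnS binS addSnnS.
rewrite natrD exprS.
ring.
Qed.

Lemma conv_full M : conv e.+1 M = (M == 0)%:R.
Proof.
case: M => [|M]; first by rewrite conv_zero.
rewrite conv_step !conv_gen // subnn !add0n !binn exprS.
transitivity (0 : R); first ring.
by [].
Qed.

Definition Fk (k b l : nat) : R :=
  ((l <= k)%N%:R * ('C(e.+1, k - l))%:R) * ((b <= l)%N%:R * w (l - b)).

Lemma Fsum k b : \sum_(l < k.+1) Fk k b l = (k == b)%:R.
Proof.
rewrite -(big_mkord xpredT).
case: (leqP b k) => hb.
  have -> : \sum_(0 <= i < k.+1) Fk k b i =
    \sum_(0 <= i < b) Fk k b i + \sum_(b <= i < k.+1) Fk k b i.
    by apply: big_cat_nat => //; apply: leq_trans hb _.
  have -> : \sum_(0 <= i < b) Fk k b i = 0.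
    rewrite big_nat_cond big1 // => l /andP[/andP[_ hl] _].
    by rewrite /Fk [(b <= l)%N]leqNgt hl mul0r mulr0.
  have E : (k == b) = (k - b == 0)%N by rewrite subn_eq0 eqn_leq hb andbT.
  rewrite add0r -{1}(add0n b) big_addn big_mkord subSn // E -conv_full.
  apply: eq_bigr => s _; rewrite /Fk.
  have hs : (s + b <= k)%N by have := ltn_ord s; lia.
  by rewrite hs leq_addl addnK (addnC s b) subnDA !mul1r.
rewrite (ltn_eqF hb) big_nat_cond big1 // => l /andP[/andP[_ hl] _].
have : (l < b)%N by apply: leq_trans hb.
by rewrite /Fk ltnNge => /negbTE ->; rewrite mul0r mulr0.
Qed.

Definition Wm : 'M[R]_m := \matrix_(a, b) (((b : nat) <= a)%N%:R * w (a - b)).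

Lemma F5 (k : 'I_N) (b : 'I_m) : (k <= m)%N ->
  (Tm^T *m Wm) k b = ((k : nat) == b)%:R - ((k : nat) == m)%:R * w (m - b).
Proof.
move=> km; rewrite !mxE.
have -> : \sum_j Tm^T k j * Wm j b = \sum_(l < m) Fk k b l.
  by apply: eq_bigr => l _; rewrite !mxE.
case: (ltngtP k m) => h.
- rewrite (@sum_trunc k.+1 m) // ?Fsum ?(ltn_eqF h) ?mul0r ?subr0 //.
  by move=> l h1 h2; rewrite /Fk leqNgt h1 !mul0r.
- by move: km; rewrite leqNgt h.
- have := Fsum m b; rewrite big_ord_recr /= => H.
  rewrite h (gtn_eqF (ltn_ord b)) mul1r; rewrite (gtn_eqF (ltn_ord b)) in H.
  have -> : \sum_(l < m) Fk m b l = 0 - Fk m b m.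
    by apply: (canRL (addrK (Fk m b m))); exact: H.
  by rewrite /Fk leqnn subnn bin0 leq_eqVlt ltn_ord orbT !mul1r sub0r.
Qed.

Lemma sum_delta_ord (n : nat) (F : 'I_n -> R) (j : nat) (hj : (j < n)%N) :
  \sum_(k < n) ((k : nat) == j)%:R * F k = F (Ordinal hj).
Proof.
rewrite (bigD1 (Ordinal hj)) //= eqxx mul1r big1 ?addr0 // => i ne.
have -> : ((i : nat) == j) = false.
  by apply/negbTE; apply: contra ne => /eqP ee; apply/eqP/val_inj.
by rewrite mul0r.
Qed.

Definition Ym : 'M[R]_m := \matrix_(l, b)
  (((l : nat) == b)%:R + x * (((l.+1 : nat) == b)%:R - ((l.+1 : nat) == m)%:R * w (m - b))).
Definition Xd : 'M[R]_m := diag_mx (\row_(l < m) x ^+ l).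

Lemma F6 : Sm *m Dm *m (Tm^T *m Wm) = Xd *m Ym.
Proof.
apply/matrixP => l b.
have F5' : forall (k : 'I_N), (k <= m)%N -> \sum_(j < m) Tm^T k j * Wm j b
    = ((k : nat) == b)%:R - ((k : nat) == m)%:R * w (m - b).
  by move=> k hk; rewrite -F5 // mxE.
rewrite /Xd mul_diag_mx /Dm mul_mx_diag !mxE.
under eq_bigr => k _ do rewrite !mxE mulrDl mulrDl.
rewrite big_split /=.
have hl1 : (l.+1 < N)%N by apply: leq_ltn_trans mN.
have hl0 : (l < N)%N by apply: ltn_trans hl1.
under eq_bigr => k _ do rewrite -mulrA.
under [X in _ + X = _]eq_bigr => k _ do rewrite -mulrA.
rewrite (sum_delta_ord (fun k : 'I_N => x ^+ k * \sum_(j < m) Tm^T k j * Wm j b) hl1).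
rewrite (sum_delta_ord (fun k : 'I_N => x ^+ k * \sum_(j < m) Tm^T k j * Wm j b) hl0).
rewrite !F5' //= ?(ltnW (ltn_ord l)) //.
rewrite (ltn_eqF (ltn_ord l)) exprS mul0r subr0.
ring.
Qed.

Lemma detW : \det Wm = 1.
Proof.
rewrite det_trig; last by apply/is_trig_mxP => i j h; rewrite mxE leqNgt h mul0r.
by rewrite big1 // => i _; rewrite mxE leqnn subnn /w expr0 addn0 bin0 !mul1r.
Qed.

Lemma detXd : \det Xd = x ^+ 'C(m, 2).
Proof.
rewrite det_diag.
under eq_bigr => i _ do rewrite mxE.
by rewrite prodrXr -bin2_sum big_mkord.
Qed.

Definition Zm : 'M[R]_m := \matrix_(a, b) (((a : nat) <= b)%N%:R * (- x) ^+ (b - a)).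

Lemma detZ : \det Zm = 1.
Proof.
rewrite -det_tr det_trig; last by apply/is_trig_mxP => i j h; rewrite !mxE leqNgt h mul0r.
by rewrite big1 // => i _; rewrite !mxE leqnn subnn expr0 mul1r.
Qed.

Definition Zf (b a : nat) : R := ((a <= b)%N%:R * (- x) ^+ (b - a)).

Lemma YZ_entry (l b : 'I_m) : (Ym *m Zm) l b =
  Zf b l + x * ((l.+1 < m)%N%:R * Zf b l.+1)
  - x * (l.+1 == m)%:R * \sum_(a < m) w (m - a) * Zf b a.
Proof.
rewrite mxE.
under eq_bigr => a _ do rewrite !mxE.
have -> : Zf b l = (l < m)%N%:R * Zf b l by rewrite ltn_ord mul1r.
rewrite -(sum_delta m l (Zf b)) -(sum_delta m l.+1 (Zf b)).
rewrite !mulr_sumr -big_split -sumrB; apply: eq_bigr => a _.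
rewrite /Zf /=.
ring.
Qed.

Lemma YZ_trig : is_trig_mx (Ym *m Zm).
Proof.
apply/is_trig_mxP => l b h; rewrite YZ_entry.
have h1 : (l.+1 < m)%N by apply: leq_ltn_trans (ltn_ord b).
rewrite h1 (ltn_eqF h1) mul1r mulr0 mul0r subr0 /Zf h (ltnW h) !mul1r.
have -> : (b - l = (b - l.+1).+1)%N by rewrite subnS prednK // subn_gt0.
rewrite exprS; ring.
Qed.

Lemma YZ_diag (l : 'I_m) : (Ym *m Zm) l l =
  1 - (l.+1 == m)%:R * x * \sum_(a < m) w (m - a) * Zf l a.
Proof.
rewrite YZ_entry {1 2}/Zf leqnn subnn expr0 mul1r ltnn mul0r !mulr0 addr0.
by rewrite (mulrC x).
Qed.

Lemma core_pre : \det Pp = x ^+ 'C(m, 2) *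
  \prod_(l < m) (1 - (l.+1 == m)%:R * x * \sum_(a < m) w (m - a) * Zf l a).
Proof.
rewrite detPp.
have -> : \det (Sm *m Dm *m Tm^T) = \det (Sm *m Dm *m Tm^T *m Wm *m Zm).
  by rewrite !det_mulmx detW detZ !mulr1.
rewrite -(mulmxA _ Tm^T) F6 -mulmxA det_mulmx detXd det_trig ?YZ_trig //.
congr (_ * _); apply: eq_bigr => l _; exact: YZ_diag.
Qed.
End Core.


Lemma sgn2 (R : comNzRingType) (i : nat) : (-1) ^+ i * (-1) ^+ i = 1 :> R.
Proof. by rewrite -exprMn mulrNN mulr1 expr1n. Qed.

Lemma core (R : comNzRingType) (x : R) (m e N : nat) : (m < N)%N ->
  \det (Pp x m e N) = x ^+ 'C(m, 2) * \sum_(t < m.+1) x ^+ t *+ 'C(e + t, t).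
Proof.
move=> mN; rewrite core_pre //.
case: m mN => [|q] mN.
  by rewrite big_ord0 big_ord1 mulr1 expr0 mul1r /= addn0 bin0.
rewrite big_ord_recr big1 ?mul1r; last first.
  move=> l _; rewrite /= eqSS (ltn_eqF (ltn_ord l)) mul0r mul0r subr0 //.
congr (_ * _).
rewrite /= eqxx (_ : true%:R = 1 :> R) // mul1r [RHS]big_ord_recl.
rewrite expr0 addn0 bin0 mul1r.
rewrite (reindex_inj rev_ord_inj) mulr_sumr -sumrN; congr (_ + _).
apply: eq_bigr => i _.
have hi : (i <= q)%N by rewrite -ltnS.
rewrite /= /Zf subSS subSn ?leq_subr // subKn // mul1r /w.
rewrite /bump leq0n add1n [(-1) ^+ _.+1]exprS (exprNn x i) addnS exprS.
set s := (-1) ^+ i.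
transitivity ((s * s) * (x * x ^+ i * ('C((e + i).+1, i.+1))%:R)); first ring.
by rewrite sgn2 mul1r mulr_natr.
Qed.

Lemma det_rev (R : comNzRingType) m (A : 'M[R]_m) :
  \det (\matrix_(i, j) A (rev_ord i) (rev_ord j)) = \det A.
Proof.
pose s := perm (@rev_ord_inj m).
have -> : \matrix_(i, j) A (rev_ord i) (rev_ord j) = row_perm s (col_perm s A).
  by apply/matrixP => i j; rewrite !mxE !permE.
rewrite row_permE col_permE !det_mulmx !det_perm odd_permV.
by rewrite mulrCA sgn2 mulr1.
Qed.

Lemma Pmat_eq (m e : nat) (y : {poly rat}) :
  Pmat (m.+1 + e.+1) m.+1 y = \matrix_(i, j) (Pp y m e (m.+1 + e.+1)) (rev_ord i) (rev_ord j).
Proof.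
apply/matrixP => i j; rewrite !mxE; apply: eq_bigr => k _.
rewrite scaler_nat.
have -> : (m.+1 - i.+1 = (m - i.+1).+1)%N by have := ltn_ord i; lia.
have -> : (m.+1 + e.+1 - 1 - j.+1 = e.+1 + (m - j.+1))%N by have := ltn_ord j; lia.
by [].
Qed.

Unset Implicit Arguments.
Set Strict Implicit.

Theorem corollary1 (n p d : nat) (hn : (0 < n)%N) (hp : (0 < p)%N)
    (hd : (0 < d)%N) (hnp : (p < n)%N) :
  toRF (\det (Pmat n p ('X ^+ (d - 1))))
      / toRF ('X ^+ ((d - 1) * 'C(p - 1, 2)))
      * (toRF ((1 - 'X ^+ d) ^+ p * (1 - 'X ^+ (d - 1)) ^+ (n - p))
           / toRF ((1 - 'X) ^+ n))
  = toRF (\sum_(k < p) ('C(n - p - 1 + k, k))%:R *: 'X ^+ (k * (d - 1)))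
      * (toRF ((1 - 'X ^+ d) ^+ p * (1 - 'X ^+ (d - 1)) ^+ (n - p))
           / toRF ((1 - 'X) ^+ n)).
Proof.
case: p hp hnp => [|m] // _ hnp.
have [e He] : exists e, n = (m.+1 + e.+1)%N by exists (n - m.+2)%N; lia.
subst n.
set y := ('X ^+ (d - 1) : {poly rat}).
rewrite Pmat_eq det_rev core; last by rewrite /= addSn ltnS leq_addr.
rewrite [m.+1.-1]/=.
have -> : ('X ^+ ((d - 1) * 'C(m.+1 - 1, 2)) = y ^+ 'C(m, 2) :> {poly rat}).
  by rewrite exprM; congr (_ ^+ _); rewrite subn1.
have -> : \sum_(k < m.+1) (('C(m.+1 + e.+1 - m.+1 - 1 + k, k))%:R : rat) *: 'X ^+ (k * (d - 1))
    = \sum_(t < m.+1) y ^+ t *+ 'C(e + t, t) :> {poly rat}.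
  apply: eq_bigr => k _; rewrite scaler_nat mulnC exprM.
  by have -> : (m.+1 + e.+1 - m.+1 - 1 = e)%N by lia.
rewrite /toRF tofracM; congr (_ * _).
rewrite mulrAC divff ?mul1r //.
by rewrite tofrac_eq0 expf_neq0 // expf_neq0 // polyX_eq0.
Qed.
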